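(* Let $\mathbf{c}\in\mathbb{R}^2$, let $\mathbf{e}_\pm\in\mathbb{R}^2$ be unit vectors with $\mathbf{e}_+\cdot\mathbf{e}_-=\cos(2\theta)$ where $2\theta\in(0,2\pi)$, let $\Gamma_\pm:=\{\mathbf{c}+t\mathbf{e}_\pm:t>0\}$ and $\Gamma:=\overline{\Gamma}_-\cup\overline{\Gamma}_+$. For $p,\tilde p\in\mathscr{C}^\infty_0(\mathbb{R}_+)$ define $\Theta_\Gamma(p,\tilde p)$ on $\Gamma$ by $\Theta_\Gamma(p,\tilde p)(\mathbf{c}+t\mathbf{e}_\pm):=(p(t)\pm\tilde p(t))/\sqrt2$ for $t>0$, and define $\langle\mathscr{A}_\Gamma(u),v\rangle_\Gamma:=\int_{\Gamma\times\Gamma}u(\mathbf{y})v(\mathbf{x})|\mathbf{x}-\mathbf{y}|^{-1/2}\,d\mathbf{x}\,d\mathbf{y}$. For $\alpha\in[0,2\pi)$ let $\mathfrak{K}_\alpha(\tau):=\big(4\sin^2(\alpha)+(\sqrt\tau-1/\sqrt\tau)^2\big)^{-1/4}$, $\tau>0$, and define $\mathscr{A}^\pm_\theta$ by $$\langle\mathscr{A}^\pm_\theta(p),q\rangle_{\mathbb{R}_+}:=\int_{\mathbb{R}_+\times\mathbb{R}_+}\big(\mathfrak{K}_0(t/s)\pm\mathfrak{K}_\theta(t/s)\big)p(s)q(t)(st)^{-1/4}\,ds\,dt.$$ Then for all $p,\tilde p,q,\tilde q\in\mathscr{C}^\infty_0(\mathbb{R}_+)$, $$\langle\mathscr{A}_\Gamma\Theta_\Gamma(p,\tilde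 p),\Theta_\Gamma(q,\tilde q)\rangle_\Gamma=\langle\mathscr{A}^+_\theta(p),q\rangle_{\mathbb{R}_+}+\langle\mathscr{A}^-_\theta(\tilde p),\tilde q\rangle_{\mathbb{R}_+}.$$
   Context: $\mathscr{C}^\infty_0(\mathbb{R}_+)$ denotes the smooth functions on $\mathbb{R}_+=[0,\infty)$ whose support is bounded and contained in $(0,+\infty)$. Integrals over $\Gamma$ are with respect to arc length. *)

(* Defs.v *)
From HB Require Import structures.
From mathcomp Require Import all_boot all_order all_algebra.
From mathcomp Require Import all_classical all_reals all_analysis.
Set Implicit Arguments. Unset Strict Implicit. Unset Printing Implicit Defensive.
Import Order.TTheory GRing.Theory Num.Theory.
Local Open Scope classical_set_scope.
Local Open Scope ring_scope.

Section Defs.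
Variable R : realType.

Definition dot2 (x y : R * R) : R := x.1 * y.1 + x.2 * y.2.
Definition edist2 (x y : R * R) : R :=
  Num.sqrt ((x.1 - y.1) ^+ 2 + (x.2 - y.2) ^+ 2).

Definition ray_pt (c e : R * R) (t : R) : R * R := (c.1 + t * e.1, c.2 + t * e.2).

Definition open_ray (c e : R * R) : set (R * R) := [set ray_pt c e t | t in `]0, +oo[].

(* p in C^oo_0(R_+): smooth on (0,+oo) with support bounded and contained in (0,+oo),
   i.e. p vanishes on (0,a) and (b,+oo) for some 0 < a <= b. *)
Definition smooth_cpt (p : R -> R) : Prop :=
  (forall (n : nat) (x : R), 0 < x -> derivable (derive1n n p) x 1) /\
  exists a b : R, 0 < a /\ a <= b /\ forall x : R, 0 < x -> (x < a \/ b < x) -> p x = 0.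

Definition ray_param (c e : R * R) (x : R * R) : R :=
  xget 0 [set t : R | 0 < t /\ x = ray_pt c e t].

Definition ThetaG (c ep em : R * R) (p pt : R -> R) (x : R * R) : R :=
  if pselect (open_ray c ep x) then
    (p (ray_param c ep x) + pt (ray_param c ep x)) / Num.sqrt 2
  else if pselect (open_ray c em x) then
    (p (ray_param c em x) - pt (ray_param c em x)) / Num.sqrt 2
  else 0.

Definition int_pos2 (F : R -> R -> R) : \bar R :=
  (\int[(@lebesgue_measure R) \x (@lebesgue_measure R)]_(z in (`]0, +oo[%classic `*` `]0, +oo[%classic)%R)
     (F z.1 z.2)%:E)%E.

(* Gamma = closure(Gamma_-) u closure(Gamma_+); arc length on Gamma is the sum of
   the push-forwards of Lebesgue measure on (0,+oo) under t |-> c + t e_(+/-)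
   (the common point c is negligible). *)
Definition int_GammaGamma (c ep em : R * R) (G : R * R -> R * R -> R) : \bar R :=
  (int_pos2 (fun s t => G (ray_pt c ep s) (ray_pt c ep t)) +
   int_pos2 (fun s t => G (ray_pt c ep s) (ray_pt c em t)) +
   int_pos2 (fun s t => G (ray_pt c em s) (ray_pt c ep t)) +
   int_pos2 (fun s t => G (ray_pt c em s) (ray_pt c em t)))%E.

Definition AGamma_pair (c ep em : R * R) (u v : R * R -> R) : \bar R :=
  int_GammaGamma c ep em (fun y x => u y * v x * (edist2 x y) `^ (- 2^-1)).

Definition frakK (alpha tau : R) : R :=
  (4 * (sin alpha) ^+ 2 + (Num.sqrt tau - (Num.sqrt tau)^-1) ^+ 2) `^ (- 4^-1).

Definition Atheta_pair (sgn : bool) (theta : R) (p q : R -> R) : \bar R :=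
  int_pos2 (fun s t =>
    (frakK 0 (t / s) + (if sgn then 1 else -1) * frakK theta (t / s))
    * p s * q t * (s * t) `^ (- 4^-1)).

End Defs.

(* Main.v *)
Require Import Defs.
From HB Require Import structures.
From mathcomp Require Import all_boot all_order all_algebra.
From mathcomp Require Import all_classical all_reals all_analysis.
From mathcomp Require Import measurable_realfun.
From mathcomp Require Import ring lra.
Set Implicit Arguments. Unset Strict Implicit. Unset Printing Implicit Defensive.
Import Order.TTheory GRing.Theory Num.Theory.
Import numFieldNormedType.Exports.
Local Open Scope classical_set_scope.
Local Open Scope ring_scope.

Section S.
Variable R : realType.
Implicit Types (s t : R).

Definition Kn (al s t : R) : R :=
  (s ^+ 2 + t ^+ 2 - 2 * s * t * cos (2 * al)) `^ (- 4^-1).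

Lemma cos2E (al : R) : cos (2 * al) = 1 - 2 * sin al ^+ 2.
Proof. rewrite mulr_natl cos_mulr2n cos2sin2. rewrite mulr2n; ring. Qed.

Lemma edist_ray (c e1 e2 : R * R) (al s t : R) :
  dot2 e1 e1 = 1 -> dot2 e2 e2 = 1 -> dot2 e1 e2 = cos (2 * al) ->
  (edist2 (ray_pt c e2 t) (ray_pt c e1 s)) `^ (- 2^-1) = Kn al s t.
Proof.
move=> h1 h2 h12; rewrite /edist2 /ray_pt /=.
have -> : (c.1 + t * e2.1 - (c.1 + s * e1.1)) ^+ 2 + (c.2 + t * e2.2 - (c.2 + s * e1.2)) ^+ 2
  = s ^+ 2 * dot2 e1 e1 + t ^+ 2 * dot2 e2 e2 - 2 * s * t * dot2 e1 e2.
  by rewrite /dot2; ring.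
have N0 : 0 <= s ^+ 2 * dot2 e1 e1 + t ^+ 2 * dot2 e2 e2 - 2 * s * t * dot2 e1 e2.
  rewrite /dot2.
  have -> : s ^+ 2 * (e1.1 * e1.1 + e1.2 * e1.2) + t ^+ 2 * (e2.1 * e2.1 + e2.2 * e2.2) -
    2 * s * t * (e1.1 * e2.1 + e1.2 * e2.2) = (t * e2.1 - s * e1.1) ^+ 2 + (t * e2.2 - s * e1.2) ^+ 2
    by ring.
  by rewrite addr_ge0 // sqr_ge0.
rewrite h1 h2 h12 !mulr1 in N0 *.
rewrite -powR12_sqrt // -powRrM /Kn; congr (_ `^ _).
by field.
Qed.

Lemma Kn_frakK (al s t : R) : 0 < s -> 0 < t ->
  Kn al s t = frakK al (t / s) * (s * t) `^ (- 4^-1).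
Proof.
move=> s0 t0; rewrite /frakK /Kn.
have ts0 : 0 < t / s by rewrite divr_gt0.
set S := Num.sqrt (t / s).
have S0 : 0 < S by rewrite sqrtr_gt0.
have S2 : S ^+ 2 = t / s by rewrite sqr_sqrtr // ltW.
rewrite -powRM; last 2 first.
- by rewrite addr_ge0 // ?sqr_ge0 // mulr_ge0 // sqr_ge0.
- by rewrite mulr_ge0 // ltW.
congr (_ `^ _).
have -> : (S - S^-1) ^+ 2 = S ^+ 2 - 2 + (S ^+ 2)^-1.
  by field; rewrite gt_eqF.
rewrite S2 cos2E; field.
by rewrite gt_eqF // gt_eqF.
Qed.

Lemma ray_inj (c e : R * R) t y : dot2 e e = 1 -> ray_pt c e t = ray_pt c e y -> t = y.
Proof.
move=> he [h1 h2].
have e1 : (t - y) * e.1 = 0.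
  by move: h1 => /(congr1 (fun z => z - c.1)); rewrite !(addrC c.1) !addrK => h; rewrite mulrBl h subrr.
have e2 : (t - y) * e.2 = 0.
  by move: h2 => /(congr1 (fun z => z - c.2)); rewrite !(addrC c.2) !addrK => h; rewrite mulrBl h subrr.
have : (t - y) * dot2 e e = 0 by rewrite /dot2 mulrDr !mulrA e1 e2 !mul0r addr0.
by rewrite he mulr1 => /eqP; rewrite subr_eq0 => /eqP.
Qed.

Lemma ray_param_pt (c e : R * R) t : dot2 e e = 1 -> 0 < t -> ray_param c e (ray_pt c e t) = t.
Proof.
move=> he t0; rewrite /ray_param; apply: xget_unique; first by split.
by move=> y [_ /ray_inj]; move/(_ he) => ->.
Qed.

Lemma open_ray_pt (c e : R * R) t : 0 < t -> open_ray c e (ray_pt c e t).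
Proof. by move=> t0; exists t => //=; rewrite in_itv /= t0. Qed.

Lemma cos2_lt1 (th : R) : 0 < 2 * th < 2 * pi -> cos (2 * th) < 1.
Proof.
move=> /andP[h1 h2]; rewrite cos2E.
have : 0 < sin th.
  apply: sin_gt0_pi; apply/andP; split.
    by rewrite -(pmulr_rgt0 _ (ltr0n _ 2)).
  by rewrite -(ltr_pM2l (ltr0n _ 2)).
move=> s0; rewrite ltrBlDr ltrDl; by rewrite mulr_gt0 // exprn_gt0.
Qed.

Lemma rays_disj (c ep em : R * R) t t' : dot2 ep ep = 1 -> dot2 em em = 1 ->
  dot2 ep em < 1 -> 0 < t -> 0 < t' -> ray_pt c ep t' <> ray_pt c em t.
Proof.
move=> hp hm hc t0 t'0 [h1 h2].
have E1 : t' * ep.1 = t * em.1.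
  by move: h1 => /(congr1 (fun z => z - c.1)); rewrite !(addrC c.1) !addrK.
have E2 : t' * ep.2 = t * em.2.
  by move: h2 => /(congr1 (fun z => z - c.2)); rewrite !(addrC c.2) !addrK.
set C := dot2 ep em in hc.
have A1 : t' = t * C.
  have -> : t' = ep.1 * (t' * ep.1) + ep.2 * (t' * ep.2) by rewrite -[LHS]mulr1 -hp /dot2; ring.
  by rewrite E1 E2 /C /dot2; ring.
have A2 : t = t' * C.
  have -> : t = em.1 * (t * em.1) + em.2 * (t * em.2) by rewrite -[LHS]mulr1 -hm /dot2; ring.
  by rewrite -E1 -E2 /C /dot2; ring.
have C0 : 0 < C by rewrite -(pmulr_rgt0 _ t0) -A1.
have A3 : t = t * (C * C) by rewrite mulrA -A1 -A2.
have : 0 < t * (1 - C) * (1 + C) by rewrite !mulr_gt0 // ?subr_gt0 // ltr_wpDr // ltW.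
have -> : t * (1 - C) * (1 + C) = t - t * (C * C) by ring.
by rewrite -A3 subrr ltxx.
Qed.

Lemma ThetaG_p (c ep em : R * R) (p pt : R -> R) t : dot2 ep ep = 1 -> 0 < t ->
  ThetaG c ep em p pt (ray_pt c ep t) = (p t + pt t) / Num.sqrt 2.
Proof.
move=> hp t0; rewrite /ThetaG; destruct (pselect (open_ray c ep (ray_pt c ep t))) as [H'|H]; last by exfalso; apply: H; exact: open_ray_pt.
by rewrite ray_param_pt.
Qed.

Lemma ThetaG_m (c ep em : R * R) (p pt : R -> R) t : dot2 ep ep = 1 -> dot2 em em = 1 ->
  dot2 ep em < 1 -> 0 < t ->
  ThetaG c ep em p pt (ray_pt c em t) = (p t - pt t) / Num.sqrt 2.
Proof.
move=> hp hm hc t0; rewrite /ThetaG; destruct (pselect (open_ray c ep (ray_pt c em t))) as [H|H'].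
  exfalso; case: H => t' /= Ht E; move: Ht; rewrite in_itv /= andbT => t'0.
  exact: (rays_disj hp hm hc t0 t'0 E).
destruct (pselect (open_ray c em (ray_pt c em t))) as [H''|H]; last by exfalso; apply: H; exact: open_ray_pt.
by rewrite ray_param_pt.
Qed.


Lemma powRN_anti (x y r : R) : 0 < x -> x <= y -> 0 <= r -> y `^ (- r) <= x `^ (- r).
Proof.
move=> x0 xy r0; rewrite !powRN lef_pV2 ?posrE ?powR_gt0 //; last exact: lt_le_trans xy.
by apply: ge0_ler_powR => //; rewrite nnegrE ltW // (lt_le_trans x0).
Qed.

Lemma powR4 (x : R) : 0 < x -> (x ^+ 4) `^ (- 4^-1) = x^-1.
Proof.
move=> x0; rewrite -powR_mulrn ?ltW // -powRrM mulrN mulfV // ?powR_inv1 // ?ltW //.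

Qed.

Lemma meas_h s : measurable_fun setT (fun t : R => ((t - s) ^+ 2) `^ (- 4^-1)).
Proof.
apply: (measurableT_comp (measurable_realfun.measurable_powR _)).
by apply: measurable_realfun.measurable_funX; apply: measurable_realfun.measurable_funB.
Qed.

Lemma core (s c : R) : 0 < c ->
  (\int[@lebesgue_measure R]_(t in `[(s - c ^+ 2)%R, (s + c ^+ 2)%R]) (((t - s) ^+ 2) `^ (- 4^-1))%:E
    <= (8 * c)%:E)%E.
Proof.
move=> c0.
pose h t := ((t - s) ^+ 2) `^ (- 4^-1).
pose q k := c / 2 ^+ k.
pose r k := c ^+ 2 / 4 ^+ k.
pose E k := [set t | r k.+1 < `|t - s| <= r k].
have q0 k : 0 < q k by rewrite divr_gt0 // exprn_gt0.
have r0 k : 0 < r k by rewrite divr_gt0 ?exprn_gt0.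
have rq k : r k = q k ^+ 2.
  rewrite /r /q expr_div_n -exprM mulnC exprM.
  by congr (_ / _ ^+ _); rewrite expr2 -natrM.
have ranti i j : (i <= j)%N -> r j <= r i.
  move=> ij; rewrite /r ler_pM2l ?exprn_gt0 // lef_pV2 ?posrE ?exprn_gt0 //.
  by apply: ler_weXn2l => //; rewrite ler1n.
have Edisj i j t : (i < j)%N -> E i t -> E j t -> False.
  move=> ij /andP[Ei1 Ei2] /andP[Ej1 Ej2].
  have := le_lt_trans (le_trans Ej2 (ranti _ _ ij)) Ei1.
  by rewrite ltxx.
have mabs : measurable_fun setT (fun t : R => `|t - s|).
  apply: measurableT_comp => //; apply: measurable_realfun.measurable_funB => //.
have mE k : measurable (E k).
  rewrite (_ : E k = (fun t => `|t - s|) @^-1` `]r k.+1, r k]).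
    by rewrite -[X in measurable X]setTI; apply: mabs => //.
  by apply/seteqP; split => t /=; rewrite in_itv /=.
have mh : measurable_fun [set: R] (fun t => (h t)%:E) by apply/measurable_EFinP; exact: meas_h.
have h_s : h s = 0 by rewrite /h subrr expr0n /= powR0 // oppr_eq0 invr_eq0.
have hbound k t : E k t -> h t <= (q k.+1)^-1.
  move=> /andP[Et1 Et2]; rewrite -powR4 //; apply: powRN_anti.
  - by rewrite exprn_gt0.
  - rewrite -real_normK ?num_real // (_ : 4 = 2 * 2)%N // exprM -rq.
    by rewrite lerXn2r ?nnegrE // ?ltW // (lt_trans (r0 _)).
  - by rewrite invr_ge0.
have mEle k : (lebesgue_measure (E k) <= (2 * r k)%:E)%E.
  apply: (@le_trans _ _ (lebesgue_measure [set` `[s - r k, s + r k]])).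
    apply: le_measure; rewrite ?inE //; first exact: mE.
    by move=> t /andP[_]; rewrite /= in_itv /= -ler_distl.
  rewrite lebesgue_measure_itv /= lte_fin ltrD2l gtrN // -EFinD lee_fin.
  lra.
pose U := \bigcup_k E k.
have UE : (\int[@lebesgue_measure R]_(t in `[(s - c ^+ 2)%R, (s + c ^+ 2)%R]) (h t)%:E =
    \int[@lebesgue_measure R]_(t in U) (h t)%:E)%E.
  rewrite integral_mkcond [RHS]integral_mkcond; apply: eq_integral => t _.
  rewrite /patch; have [->|ts] := eqVneq t s.
    by rewrite h_s; do 2 case: ifP => //.
  have dp : 0 < `|t - s| by rewrite normr_gt0 subr_eq0.
  case: ifPn => [tI|tI]; case: ifPn => [tU|tU] //.
  - exfalso; move/negP: tU; apply; rewrite inE.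
    move: tI; rewrite inE /= in_itv /= -ler_distl => tI.
    pose P := fun n => r n < `|t - s|.
    have exP : exists n, P n.
      exists (Num.Def.archi_bound (`|t - s|^-1 * c ^+ 2)); rewrite /P /r.
      rewrite ltr_pdivrMr ?exprn_gt0 // -ltr_pdivrMl //.
      apply: (lt_trans (archi_boundP _)); first by rewrite mulr_ge0 // ?invr_ge0 ?sqr_ge0.
      by rewrite -natrX ltr_nat ltn_expl.
    case: (ex_minnP exP) => n Pn nmin.
    case: n Pn nmin => [|k] Pn nmin.
      by move: Pn; rewrite /P /r expr0 divr1 ltNge tI.
    exists k => //; apply/andP; split => //=.
    by rewrite leNgt; apply/negP => /nmin; rewrite ltnn.
  - exfalso; move/negP: tI; apply; rewrite inE /= in_itv /= -ler_distl.
    move: tU; rewrite inE => -[k _ /andP[_ Ek]].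
    by rewrite (le_trans Ek) // (le_trans (ranti 0%N k _)) // /r expr0 divr1.
rewrite UE ge0_integral_bigcup //; last 3 first.
- exact: measurable_funS mh.
- by move=> t _; rewrite lee_fin powR_ge0.
- move=> i j _ _ [t [Ei Ej]]; apply/eqP; rewrite eqn_leq; apply/andP; split;
    rewrite leqNgt; apply/negP => lt.
  + exact: (Edisj _ _ _ lt Ej Ei).
  + exact: (Edisj _ _ _ lt Ei Ej).
apply: le_trans (epsilon_trick0 xpredT _); last by rewrite mulr_ge0 // ltW.
apply: lee_nneseries => k _.
  by move=> _; apply: integral_ge0 => t _; rewrite lee_fin powR_ge0.
apply: (@le_trans _ _ (\int[@lebesgue_measure R]_(t in E k) (cst ((q k.+1)^-1)%:E) t)%E).
  apply: ge0_le_integral; first exact: mE.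
  - by move=> t _; rewrite lee_fin powR_ge0.
  - exact: measurable_funS mh.
  - exact: measurable_cst.
  - by move=> t Et; rewrite lee_fin hbound.
rewrite integral_cst; last exact: mE.
apply: (@le_trans _ _ (((q k.+1)^-1)%:E * (2 * r k)%:E)%E).
  by apply: lee_wpmul2l; [rewrite lee_fin invr_ge0 ltW | exact: mEle].
rewrite -EFinM lee_fin /q /r natrX.
have -> : (4 : R) ^+ k = (2 ^+ k) ^+ 2.
  by rewrite -exprM mulnC exprM expr2 -natrM.
rewrite exprS le_eqVlt; apply/orP; left; apply/eqP; field.
by rewrite expf_neq0 // gt_eqF.
Qed.

End S.

Section S.
Variable R : realType.
Implicit Types (s t : R).

Lemma Kn_bound (al A x y : R) : 0 < A -> A <= x -> A <= y ->
  Kn al x y <= ((y - x) ^+ 2) `^ (- 4^-1) + (2 * A ^+ 2 * (1 - cos (2 * al))) `^ (- 4^-1).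
Proof.
move=> A0 Ax Ay.
have x0 : 0 < x by exact: lt_le_trans Ax.
have y0 : 0 < y by exact: lt_le_trans Ay.
set k := 1 - cos (2 * al).
have k0 : 0 <= k by rewrite subr_ge0 cos_le1.
have NE : x ^+ 2 + y ^+ 2 - 2 * x * y * cos (2 * al) = (y - x) ^+ 2 + 2 * x * y * k.
  by rewrite /k; ring.
rewrite /Kn NE.
have [->|yx] := eqVneq y x.
  rewrite subrr expr0n /= add0r powR0; last by rewrite oppr_eq0 invr_eq0.
  rewrite add0r.
  have [->|kp] := eqVneq k 0.
    by rewrite !mulr0 powR0 ?powR_ge0 // oppr_eq0 invr_eq0.
  have kp' : 0 < k by rewrite lt_neqAle eq_sym kp k0.
  apply: powRN_anti; rewrite ?invr_ge0 //.
    by rewrite !mulr_gt0 // exprn_gt0.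
  rewrite -!mulrA ler_pM2l // mulrA mulrA ler_pM2r //.
  by rewrite ler_pM // ltW.
apply: (@le_trans _ _ (((y - x) ^+ 2) `^ (- 4^-1))); last by rewrite lerDl powR_ge0.
apply: powRN_anti; rewrite ?invr_ge0 //.
  by rewrite lt_neqAle sqr_ge0 andbT eq_sym sqrf_eq0 subr_eq0.
by rewrite lerDl !mulr_ge0 // ltW.
Qed.

Definition nice (a : R -> R) : Prop :=
  measurable_fun (`]0, +oo[ : set R) a /\ (exists M, forall x, 0 < x -> `|a x| <= M) /\
  exists A B : R, 0 < A /\ A <= B /\ forall x : R, 0 < x -> (x < A \/ B < x) -> a x = 0.

Definition D2 : set (measurableTypeR R * measurableTypeR R) := (`]0, +oo[%classic `*` `]0, +oo[%classic).

Lemma mD2 : measurable D2.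
Proof. by apply: measurableX; exact: measurable_itv. Qed.

Lemma Jint (al : R) (a b : R -> R) : nice a -> nice b ->
  ((@lebesgue_measure R) \x (@lebesgue_measure R))%E.-integrable D2
    (fun z => (Kn al z.1 z.2 * a z.1 * b z.2)%:E).
Proof.
move=> [ma [[Ma hMa] [Aa [Ba [Aa0 [AB1 za]]]]]] [mb [[Mb hMb] [Ab [Bb [Ab0 [AB2 zb]]]]]].
pose A := Num.min Aa Ab; pose B := Num.max Ba Bb.
have A0 : 0 < A by rewrite lt_min Aa0 Ab0.
have AAa : A <= Aa by rewrite ge_min lexx.
have AAb : A <= Ab by rewrite ge_min lexx orbT.
have BaB : Ba <= B by rewrite le_max lexx.
have BbB : Bb <= B by rewrite le_max lexx orbT.
have AB : A <= B by rewrite (le_trans AAa) // (le_trans AB1).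
have za' x : 0 < x -> (x < A \/ B < x) -> a x = 0.
  move=> x0 [xA|Bx]; apply: za => //; [left|right].
    exact: lt_le_trans xA AAa.
  exact: le_lt_trans BaB Bx.
have zb' x : 0 < x -> (x < A \/ B < x) -> b x = 0.
  move=> x0 [xA|Bx]; apply: zb => //; [left|right].
    exact: lt_le_trans xA AAb.
  exact: le_lt_trans BbB Bx.
have Ma0 : 0 <= Ma by rewrite (le_trans _ (hMa 1 ltr01)).
have Mb0 : 0 <= Mb by rewrite (le_trans _ (hMb 1 ltr01)).
pose a' := a \_ `]0, +oo[%classic; pose b' := b \_ `]0, +oo[%classic.
have ma' : measurable_fun setT a' by exact: (measurable_restrictT a (measurable_itv `]0, +oo[)).1 ma.
have mb' : measurable_fun setT b' by exact: (measurable_restrictT b (measurable_itv `]0, +oo[)).1 mb.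
pose F z := Kn al z.1 z.2 * a' z.1 * b' z.2.
have mF : measurable_fun [set: measurableTypeR R * measurableTypeR R] F.
  rewrite /F; apply: (@measurable_funM _ _ _ _ (fun z => Kn al z.1 z.2 * a' z.1) (fun z => b' z.2)); last first.
    exact: measurableT_comp mb' measurable_snd.
  apply: (@measurable_funM _ _ _ _ (fun z => Kn al z.1 z.2) (fun z => a' z.1)); last first.
    exact: measurableT_comp ma' measurable_fst.
  apply: (measurableT_comp (measurable_powR _)).
  apply: measurable_funB; first apply: measurable_funD.
  + by apply: measurable_funX; exact: measurable_fst.
  + by apply: measurable_funX; exact: measurable_snd.
  + apply: (@measurable_funM _ _ _ _ (fun z : R * R => 2 * z.1 * z.2) (fun=> cos (2 * al))) => //.
    apply: (@measurable_funM _ _ _ _ (fun z : R * R => 2 * z.1) snd); last exact: measurable_snd.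
    apply: (@measurable_funM _ _ _ _ (fun=> 2) fst) => //; exact: measurable_fst.
have eqF : {in D2, EFin \o F =1 (fun z => (Kn al z.1 z.2 * a z.1 * b z.2)%:E)}.
  move=> [x y]; rewrite inE => -[/= x0 y0]; rewrite /F /a' /b' /patch /=.
  by rewrite !mem_set.
suff H : ((@lebesgue_measure R) \x (@lebesgue_measure R))%E.-integrable D2 (EFin \o F).
  exact: (eq_integrable mD2 _ _ eqF H).
apply: (integrableS measurableT) => //; first exact: mD2.
have mEF : measurable_fun [set: measurableTypeR R * measurableTypeR R] (EFin \o F) by exact/measurable_EFinP.
apply/(integrable12ltyP _ _ mEF).
pose c := B - A + 1.
have c0 : 0 < c by rewrite /c ltr_wpDl // subr_ge0.
have c1 : 1 <= c by rewrite /c lerDr subr_ge0.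
pose C := (2 * A ^+ 2 * (1 - cos (2 * al))) `^ (- 4^-1).
pose Mab := Ma * Mb.
have Mab0 : 0 <= Mab by rewrite mulr_ge0.
have C0 : 0 <= C by rewrite powR_ge0.
pose K := Mab * (8 * c) + Mab * C * (2 * c ^+ 2).
have a'0 x : ~~ (A <= x <= B) -> a' x = 0.
  move=> xI; rewrite /a' /patch; case: ifPn => // /[!inE] /=; rewrite in_itv /= andbT => x0.
  apply: za' => //; move: xI; rewrite negb_and -!ltNge => /orP[xA|Bx]; by [left|right].
have b'0 x : ~~ (A <= x <= B) -> b' x = 0.
  move=> xI; rewrite /b' /patch; case: ifPn => // /[!inE] /=; rewrite in_itv /= andbT => x0.
  apply: zb' => //; move: xI; rewrite negb_and -!ltNge => /orP[xA|Bx]; by [left|right].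
have Fbound x y : A <= x <= B -> A <= y <= B ->
    `|F (x, y)| <= Mab * (((y - x) ^+ 2) `^ (- 4^-1) + C).
  move=> /andP[Ax xB] /andP[Ay yB].
  have x0 : 0 < x by exact: lt_le_trans Ax.
  have y0 : 0 < y by exact: lt_le_trans Ay.
  rewrite /F /a' /b' /patch /= !mem_set /=; try by rewrite in_itv /= andbT.
  rewrite !normrM ger0_norm ?powR_ge0 //.
  rewrite [Mab * _]mulrC /Mab mulrA; apply: ler_pM; rewrite ?mulr_ge0 ?normr_ge0 ?powR_ge0 //.
  - apply: ler_pM; rewrite ?normr_ge0 ?powR_ge0 //; first exact: Kn_bound.
    exact: hMa.
  - exact: hMb.
have mAF : measurable_fun [set: measurableTypeR R * measurableTypeR R]
    (abse \o (EFin \o F)) by exact: (measurableT_comp (@abse_measurable R setT) mEF).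
have inner x : A <= x <= B ->
    (\int[@lebesgue_measure R]_y `|(EFin \o F) (x, y)| <= K%:E)%E.
  move=> xI; pose J := `[(x - c ^+ 2)%R, (x + c ^+ 2)%R]%classic.
  have mJ : measurable J by exact: measurable_itv.
  pose g := fun y : R => (Mab * (((y - x) ^+ 2) `^ (- 4^-1) + C))%:E.
  have mg : measurable_fun [set: measurableTypeR R] g.
    apply/measurable_EFinP; apply: measurable_funM => //.
    by apply: measurable_funD => //; exact: meas_h.
  apply: (@le_trans _ _ (\int[@lebesgue_measure R]_y ((g \_ J) y))%E).
    apply: ge0_le_integral => //.
    - exact: (measurable_fun_pair2 x mAF).
    - exact: (measurable_restrictT g mJ).1 (measurable_funS measurableT (@subsetT _ _) mg).
    - move=> y _; case: (boolP (A <= y <= B)) => yI.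
        have yJ : y \in J.
          rewrite mem_set // /J /= in_itv /=; move: xI yI => /andP[Ax xB] /andP[Ay yB].
          have hc2 : c <= c ^+ 2 by rewrite expr2 ler_peMr // ltW.
          rewrite /c in hc2 *; apply/andP; split; lra.
        by rewrite patchT //= lee_fin; exact: Fbound.
      rewrite /= /F b'0 // mulr0 normr0 /patch; case: ifP => // _.
      by rewrite lee_fin mulr_ge0 // addr_ge0 // powR_ge0.
  rewrite -integral_mkcond.
  under eq_integral => y _ do rewrite /g mulrDr EFinD EFinM.
  have mh : measurable_fun J (fun y : R => (((y - x) ^+ 2) `^ (- 4^-1))%:E).
    apply/measurable_EFinP; apply: measurable_funS (meas_h x) => //.
  rewrite ge0_integralD //; try (by move=> y _; rewrite mule_ge0 // lee_fin powR_ge0);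
    try (by apply: emeasurable_funM => //; exact: measurable_cst);
    try (by move=> y _; rewrite lee_fin mulr_ge0); try exact: measurable_cst.
  rewrite ge0_integralZl //; try (by move=> y _; rewrite lee_fin powR_ge0);
    try (by rewrite lee_fin).
  rewrite integral_cst //.
  have mJv : (@lebesgue_measure R) J = (2 * c ^+ 2)%:E.
    rewrite /J lebesgue_measure_itv /= lte_fin ltrD2l gtrN ?exprn_gt0 // -EFinD; congr EFin; ring.
  rewrite [X in (_ + _ * X <= _)%E]mJv.
  rewrite /K EFinD; apply: leeD.
    rewrite (EFinM Mab); apply: lee_wpmul2l; first by rewrite lee_fin.
    exact: core.
  rewrite -EFinM lee_fin; apply: ler_pM => //; first by rewrite mulr_ge0.
  by rewrite mulr_ge0 // sqr_ge0.
have mI : measurable (`[A, B]%classic : set (measurableTypeR R)) by exact: measurable_itv.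
apply: (@le_lt_trans _ _ (\int[@lebesgue_measure R]_x (((cst K%:E) \_ `[A, B]%classic) x))%E).
  apply: ge0_le_integral => //.
  - by move=> x _; apply: integral_ge0.
  - exact: (@measurable_fun_fubini_tonelli_F _ _ _ _ R (@lebesgue_measure R) (abse \o (EFin \o F)) mAF (fun _ => abse_ge0 _)).
  - exact: (measurable_restrictT _ mI).1 (measurable_cst _).
  - move=> x _; case: (boolP (A <= x <= B)) => xI.
      rewrite patchT; first exact: inner.
      by rewrite mem_set //= in_itv.
    rewrite /patch ifF; last by apply/negbTE; rewrite notin_setE /= in_itv /=; apply/negP.
    rewrite integral0_eq // => y _ /=.
    by rewrite /F a'0 // mulr0 mul0r normr0.
rewrite -integral_mkcond integral_cst //.
have mIv : (@lebesgue_measure R) `[A, B]%classic = (B - A)%:E.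
  rewrite lebesgue_measure_itv /= lte_fin; case: ltP => //.
  move=> BA; have -> : B = A by apply/le_anti; rewrite AB BA.
  by rewrite subrr.
by rewrite [X in (_ * X < _)%E]mIv -EFinM ltry.
Qed.

End S.

Section S.
Variable R : realType.
Implicit Types (s t : R).

Lemma niceD (a b : R -> R) : nice a -> nice b -> nice (fun x => a x + b x).
Proof.
move=> [ma [[Ma hMa] [Aa [Ba [Aa0 [AB1 za]]]]]] [mb [[Mb hMb] [Ab [Bb [Ab0 [AB2 zb]]]]]].
split; first exact: measurable_funD.
split.
  exists (Ma + Mb) => x x0; rewrite (le_trans (ler_normD _ _)) // lerD //; [exact: hMa|exact: hMb].
exists (Num.min Aa Ab), (Num.max Ba Bb); split; first by rewrite lt_min Aa0 Ab0.
have AAa : Num.min Aa Ab <= Aa by rewrite ge_min lexx.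
have AAb : Num.min Aa Ab <= Ab by rewrite ge_min lexx orbT.
have BaB : Ba <= Num.max Ba Bb by rewrite le_max lexx.
have BbB : Bb <= Num.max Ba Bb by rewrite le_max lexx orbT.
split; first by rewrite (le_trans AAa) // (le_trans AB1).
move=> x x0 [xA|Bx].
  by rewrite za ?zb ?addr0 //; left; [exact: lt_le_trans xA AAb|exact: lt_le_trans xA AAa].
by rewrite za ?zb ?addr0 //; right; [exact: le_lt_trans BbB Bx|exact: le_lt_trans BaB Bx].
Qed.

Lemma niceN (a : R -> R) : nice a -> nice (fun x => - a x).
Proof.
move=> [ma [[Ma hMa] [Aa [Ba [Aa0 [AB1 za]]]]]].
split; first exact: measurable_funN.
split; first by exists Ma => x x0; rewrite normrN; exact: hMa.
exists Aa, Ba; do 2 split => //.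
by move=> x x0 h; rewrite za // oppr0.
Qed.

Lemma niceM (a : R -> R) (k : R) : nice a -> nice (fun x => a x * k).
Proof.
move=> [ma [[Ma hMa] [Aa [Ba [Aa0 [AB1 za]]]]]].
split; first by apply: measurable_funM => //.
split; first by exists (Ma * `|k|) => x x0; rewrite normrM ler_wpM2r //; exact: hMa.
exists Aa, Ba; do 2 split => //.
by move=> x x0 h; rewrite za // mul0r.
Qed.

Lemma smooth_nice (p : R -> R) : smooth_cpt p -> nice p.
Proof.
move=> [hd [A [B [A0 [AB zp]]]]].
have cp x : 0 < x -> {for x, continuous p}.
  move=> x0; apply: differentiable_continuous; apply/derivable1_diffP.
  exact: (hd 0%N x x0).
split.
  apply: open_continuous_measurable_fun; first exact: rray_open.
  by move=> x; rewrite inE /= in_itv /= andbT => x0; exact: cp.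
split; last by exists A, B.
have : {within `[A, B], continuous (fun x => `|p x|)}.
  apply: continuous_in_subspaceT => x; rewrite inE /= in_itv /= => /andP[Ax _].
  apply: continuous_comp; first exact: cp (lt_le_trans A0 Ax).
  exact: norm_continuous.
move=> /(EVT_max AB) [m _ hm].
exists `|p m| => x x0.
have [/andP[Ax xB]|] := boolP (A <= x <= B).
  by apply: hm; rewrite in_itv /= Ax xB.
rewrite negb_and -!ltNge => /orP h.
by rewrite zp // ?normr0 // ; case: h; by [left|right].
Qed.

End S.

Section S.
Variable R : realType.
Implicit Types (s t : R).

Definition Ig (F : R -> R -> R) : Prop :=
  ((@lebesgue_measure R) \x (@lebesgue_measure R))%E.-integrable (@D2 R)
    (fun z => (F z.1 z.2)%:E).

Lemma IgJ al (a b : R -> R) : nice a -> nice b -> Ig (fun s t => Kn al s t * a s * b t).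
Proof. exact: Jint. Qed.

Lemma IgD F G : Ig F -> Ig G -> Ig (fun s t => F s t + G s t).
Proof.
move=> iF iG; have H := integrableD (@mD2 R) iF iG.
refine (eq_integrable (@mD2 R) _ _ _ H) => z _; by rewrite /= EFinD.
Qed.

Lemma int_pos2D F G : Ig F -> Ig G ->
  (int_pos2 F + int_pos2 G)%E = int_pos2 (fun s t => F s t + G s t).
Proof.
move=> iF iG; rewrite /int_pos2.
have := integralD (@mD2 R) iF iG; rewrite /D2 => ->.
by [].
Qed.

Lemma int_pos2_ext F G : (forall s t, 0 < s -> 0 < t -> F s t = G s t) ->
  int_pos2 F = int_pos2 G.
Proof.
move=> h; rewrite /int_pos2; apply: eq_integral => -[s t]; rewrite inE => -[/= s0 t0].
by rewrite h //; move: s0 t0; rewrite /= !in_itv /= !andbT.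
Qed.

End S.

Theorem lemma1 (R : realType) (c ep em : R * R) (theta : R)
  (hep : dot2 ep ep = 1) (hem : dot2 em em = 1)
  (hcos : dot2 ep em = cos (2 * theta))
  (htheta : 0 < 2 * theta < 2 * pi)
  (p pt q qt : R -> R)
  (hp : smooth_cpt p) (hpt : smooth_cpt pt) (hq : smooth_cpt q) (hqt : smooth_cpt qt) :
  AGamma_pair c ep em (ThetaG c ep em p pt) (ThetaG c ep em q qt) =
  (Atheta_pair true theta p q + Atheta_pair false theta pt qt)%E.
Proof.
have hc1 : dot2 ep em < 1 by rewrite hcos; exact: cos2_lt1.
have hp0 : dot2 ep ep = cos (2 * 0) by rewrite mulr0 cos0.
have hm0 : dot2 em em = cos (2 * 0) by rewrite mulr0 cos0.
have hme : dot2 em ep = cos (2 * theta) by rewrite -hcos /dot2 mulrC (mulrC em.2 ep.2).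
set r := Num.sqrt (2 : R).
have np := smooth_nice hp; have npt := smooth_nice hpt.
have nq := smooth_nice hq; have nqt := smooth_nice hqt.
have nu1 : nice (fun s => (p s + pt s) / r) by apply: niceM; apply: niceD.
have nu2 : nice (fun s => (p s - pt s) / r) by apply: niceM; apply: niceD => //; apply: niceN.
have nv1 : nice (fun s => (q s + qt s) / r) by apply: niceM; apply: niceD.
have nv2 : nice (fun s => (q s - qt s) / r) by apply: niceM; apply: niceD => //; apply: niceN.
have nmqt : nice (fun s => - qt s) by apply: niceN.
rewrite /AGamma_pair /int_GammaGamma.
rewrite [X in (X + _ + _ + _)%E](@int_pos2_ext R _ (fun s t => Kn 0 s t * ((p s + pt s) / r) * ((q t + qt t) / r))); last first.
  move=> s t s0 t0; rewrite !ThetaG_p // (@edist_ray R c ep ep 0 s t hep hep hp0); ring.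
rewrite [X in (_ + X + _ + _)%E](@int_pos2_ext R _ (fun s t => Kn theta s t * ((p s + pt s) / r) * ((q t - qt t) / r))); last first.
  move=> s t s0 t0; rewrite ThetaG_p // ThetaG_m // (@edist_ray R c ep em theta s t hep hem hcos); ring.
rewrite [X in (_ + _ + X + _)%E](@int_pos2_ext R _ (fun s t => Kn theta s t * ((p s - pt s) / r) * ((q t + qt t) / r))); last first.
  move=> s t s0 t0; rewrite ThetaG_m // ThetaG_p // (@edist_ray R c em ep theta s t hem hep hme); ring.
rewrite [X in (_ + X = _)%E](@int_pos2_ext R _ (fun s t => Kn 0 s t * ((p s - pt s) / r) * ((q t - qt t) / r))); last first.
  move=> s t s0 t0; rewrite !ThetaG_m // (@edist_ray R c em em 0 s t hem hem hm0); ring.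
rewrite /Atheta_pair /=.
rewrite [X in (_ = X + _)%E](@int_pos2_ext R _ (fun s t => Kn 0 s t * p s * q t + Kn theta s t * p s * q t)); last first.
  by move=> s t s0 t0; rewrite !(Kn_frakK _ s0 t0); ring.
rewrite [X in (_ = _ + X)%E](@int_pos2_ext R _ (fun s t => Kn 0 s t * pt s * qt t + Kn theta s t * pt s * (- qt t)));
  last by move=> s t s0 t0; rewrite !(Kn_frakK _ s0 t0); ring.
rewrite (int_pos2D (@IgJ R 0 _ _ nu1 nv1) (@IgJ R theta _ _ nu1 nv2)).
rewrite (int_pos2D (IgD (@IgJ R 0 _ _ nu1 nv1) (@IgJ R theta _ _ nu1 nv2)) (@IgJ R theta _ _ nu2 nv1)).
rewrite (int_pos2D (IgD (IgD (@IgJ R 0 _ _ nu1 nv1) (@IgJ R theta _ _ nu1 nv2)) (@IgJ R theta _ _ nu2 nv1))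
  (@IgJ R 0 _ _ nu2 nv2)).
rewrite (int_pos2D (IgD (@IgJ R 0 _ _ np nq) (@IgJ R theta _ _ np nq))
  (IgD (@IgJ R 0 _ _ npt nqt) (@IgJ R theta _ _ npt nmqt))).
apply: int_pos2_ext => s t _ _.
have r2 : r * r = 2 by rewrite -expr2 sqr_sqrtr // ler0n.
have rn0 : r != 0 by apply/eqP => r0; move: r2; rewrite r0 mul0r => /eqP; rewrite eq_sym pnatr_eq0.
set K0 := Kn 0 s t; set K1 := Kn theta s t.
transitivity ((K0 * (p s * q t + pt s * qt t) + K1 * (p s * q t - pt s * qt t)) * (2 / (r * r))).
  by field.
by rewrite r2 divff ?pnatr_eq0 // mulr1; ring.
Qed.
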